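(* Let $G$ be a commutative group, $H$ a subgroup, $G'=G/H$ and $\varphi:G\to G'$ the natural homomorphism, $1<p<\infty$, and $f\in\ell^1(G)$ nonnegative. Define $f_\varphi$ on $G'$ by $f_\varphi(x)=\gamma_p\bigl(f|_{\varphi^{-1}(x)}\bigr)$. Then $\gamma_p(f)\ge\gamma_p(f_\varphi)$, where $\gamma_p(f_\varphi)$ is computed in $G'$.
   Context: For nonnegative functions $f,g$ on a commutative group $K$, $(f\star g)(x)=\max_t f(t)g(x-t)$. For nonnegative $f\in\ell^1(K)$ and $1/p+1/q=1$, $\gamma_p(f)=\inf_{g,h}\frac{\|f\star g\star h\|_1}{\|g\|_p\|h\|_q}$, infimum over nonzero nonnegative $g,h\in\ell^1(K)$. Here $f|_{\varphi^{-1}(x)}$ denotes the function on $G$ equal to $f$ on the coset $\varphi^{-1}(x)$ and $0$ elsewhere, and $\gamma_p$ of it is computed in $G$. *)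

(* Defs.v *)
From HB Require Import structures.
From mathcomp Require Import all_boot all_order all_algebra.
From mathcomp Require Import all_classical all_reals all_analysis.
Set Implicit Arguments. Unset Strict Implicit. Unset Printing Implicit Defensive.
Import Order.TTheory GRing.Theory Num.Theory.
Local Open Scope classical_set_scope.
Local Open Scope ring_scope.

Section GammaDefs.
Context {R : realType} {K : zmodType}.

Definition nonneg_l1 (f : K -> R) : Prop :=
  (forall x, 0 <= f x) /\ summable [set: K] (fun x => (f x)%:E).

Definition norm1 (f : K -> R) : R := fine (\esum_(x in [set: K]) (f x)%:E).

Definition normp (p : R) (g : K -> R) : R :=
  (fine (\esum_(x in [set: K]) ((g x) `^ p)%:E)) `^ (p^-1).

Definition mconv (f g : K -> R) : K -> R :=
  fun x => sup [set f t * g (x - t) | t in [set: K]].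

(* gamma_p(f) = inf over nonzero nonnegative g, h in l^1 of
   ||f*g*h||_1 / (||g||_p ||h||_q), with 1/p + 1/q = 1 *)
Definition gammap (p : R) (f : K -> R) : R :=
  inf [set r : R | exists g h : K -> R,
         [/\ nonneg_l1 g, nonneg_l1 h, g <> (fun=> 0), h <> (fun=> 0) &
             r = norm1 (mconv (mconv f g) h) /
                 (normp p g * normp (p / (p - 1)) h)]].

End GammaDefs.

(* Main.v *)
Require Import Defs.
From HB Require Import structures.
From mathcomp Require Import all_boot all_order all_algebra.
From mathcomp Require Import all_classical all_reals all_analysis.
From mathcomp Require Import lra.
Import Order.TTheory GRing.Theory Num.Theory.
Local Open Scope classical_set_scope.
Local Open Scope ring_scope.

Section Generic.
Variable R : realType.

Lemma esum_ge0' (T : choiceType) (S : set T) (a : T -> \bar R) :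
  (0 <= \esum_(i in S) a i)%E.
Proof.
apply: ereal_sup_ubound; exists set0; first exact: fsets_set0.
by rewrite fsbig_set0.
Qed.

Lemma esum_scale_le (T : choiceType) (S : set T) (a : T -> \bar R) (c : \bar R) :
  (0 <= c)%E -> (forall x, 0 <= a x)%E ->
  (\esum_(i in S) (c * a i) <= c * \esum_(i in S) a i)%E.
Proof.
move=> c0 a0; apply: ge_ereal_sup => _ [X [finX XS] <-].
rewrite -ge0_mule_fsumr //; apply: lee_wpmul2l => //.
by apply: ereal_sup_ubound; exists X.
Qed.

Lemma esum_term_le (T : choiceType) (a : T -> \bar R) x :
  (forall y, 0 <= a y)%E -> (a x <= \esum_(i in [set: T]) a i)%E.
Proof.
move=> a0; apply: esum_ge; exists [set x]; first by split => //; exact: finite_set1.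
by rewrite fsbig_set1.
Qed.

Lemma esum_partition (G G' : choiceType) (phi : G -> G') (a : G -> \bar R) :
  (forall x, 0 <= a x)%E ->
  \esum_(x in [set: G]) a x =
  \esum_(c in [set: G']) \esum_(x in [set: G]) (if phi x == c then a x else 0)%E.
Proof.
move=> a0.
transitivity (\esum_(c in [set: G']) \esum_(x in [set x | phi x = c]) a x).
  rewrite esum_esum //.
  rewrite (@reindex_esum _ _ _ [set: G] _ (fun x => (phi x, x))) //.
  split.
  - by move=> x _ /=.
  - by move=> x y _ _ [].
  - by move=> [c x] [_ /= <-]; exists x.
apply: eq_esum => c _; rewrite esum_mkcond; apply: eq_esum => x _.
case: eqP => [<-|ne]; first by rewrite mem_set.
by rewrite memNset.
Qed.

End Generic.


Section L1.
Variables (R : realType) (K : zmodType).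
Implicit Types f g h : K -> R.

Lemma l1_esum f : nonneg_l1 f -> \esum_(x in [set: K]) (f x)%:E = (norm1 f)%:E.
Proof.
move=> [f0 fs]; rewrite /norm1 fineK //.
have -> : \esum_(x in [set: K]) (f x)%:E = \esum_(x in [set: K]) `|(f x)%:E|%E.
  by apply: eq_esum => x _; rewrite gee0_abs // lee_fin.
by move: fs; rewrite summableE.
Qed.

Lemma l1_le f x : nonneg_l1 f -> f x <= norm1 f.
Proof.
move=> hf; rewrite -lee_fin -l1_esum //; apply: esum_term_le => y.
by rewrite lee_fin; case: hf.
Qed.

Lemma norm1_ge0 f : 0 <= norm1 f.
Proof. exact/fine_ge0/esum_ge0'. Qed.

Lemma l1_of_bound f : (forall x, 0 <= f x) ->
  (\esum_(x in [set: K]) (f x)%:E < +oo)%E -> nonneg_l1 f.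
Proof.
move=> f0 lt; split => //; rewrite /summable.
rewrite (eq_esum (b := fun x => (f x)%:E)) // => x _.
by rewrite gee0_abs // lee_fin.
Qed.

Section Conv.
Variables (f g : K -> R) (hf : nonneg_l1 f) (hg : nonneg_l1 g).

Lemma mconv_ub x : has_ubound [set f t * g (x - t) | t in [set: K]].
Proof.
exists (norm1 f * norm1 g) => _ [t _ <-].
apply: ler_pM; [exact: hf.1|exact: hg.1|exact: l1_le|exact: l1_le].
Qed.

Lemma mconv_ge x t : f t * g (x - t) <= mconv f g x.
Proof. by apply: (ub_le_sup (mconv_ub x)); exists t. Qed.

Lemma mconv_ge0 x : 0 <= mconv f g x.
Proof. apply: le_trans (mconv_ge x 0); apply: mulr_ge0; [exact: hf.1|exact: hg.1]. Qed.

Lemma mconv_le_esum x :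
  ((mconv f g x)%:E <= \esum_(t in [set: K]) (f t * g (x - t))%:E)%E.
Proof.
set E := esum _ _.
have E0 : (0 <= E)%E by exact: esum_ge0'.
have [fin|nfin] := boolP (E \is a fin_num).
  rewrite -(fineK fin) lee_fin; apply: ge_sup; first by exists (f 0 * g (x - 0)), 0.
  move=> _ [t _ <-]; rewrite -lee_fin fineK //.
  apply: (@esum_term_le _ _ (fun t => (f t * g (x - t))%:E)) => y.
  by rewrite lee_fin; apply: mulr_ge0; [exact: hf.1|exact: hg.1].
move: nfin; rewrite ge0_fin_numE // ltey negbK => /eqP ->.
exact: leey.
Qed.

Lemma mconv_l1 : nonneg_l1 (mconv f g).
Proof.
apply: l1_of_bound; first exact: mconv_ge0.
apply: (@le_lt_trans _ _ ((norm1 f * norm1 g)%:E)); last exact: ltry.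
apply: le_trans; first exact: (le_esum (fun x _ => mconv_le_esum x)).
have eT : [set: K] `*`` (fun _ => [set: K]) = [set: K * K].
  by apply/seteqP; split.
have f0 := hf.1; have g0 := hg.1.
rewrite esum_esum /=; last by move=> *; rewrite lee_fin mulr_ge0.
rewrite eT.
rewrite -(@reindex_esum _ _ _ [set: K * K] [set: K * K]
  (fun k => (k.2, k.1 - k.2)) (fun k => (f k.1 * g k.2)%:E)); last first.
  rewrite setTT_bijective; exists (fun k => (k.1 + k.2, k.1)).
    by case=> x t /=; rewrite addrC subrK.
  by case=> t s /=; rewrite [t + s]addrC addrK.
rewrite -eT -(@esum_esum _ _ _ [set: K] (fun _ => [set: K]) (fun t s => (f t * g s)%:E)) /=; last by move=> *; rewrite lee_fin mulr_ge0.
apply: (@le_trans _ _ (\esum_(t in [set: K]) ((norm1 g)%:E * (f t)%:E)%E)).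
  apply: le_esum => t _.
  under eq_esum do rewrite EFinM.
  rewrite muleC; apply: le_trans; first apply: esum_scale_le.
  - by rewrite lee_fin.
  - by move=> s; rewrite lee_fin.
  by rewrite l1_esum.
apply: le_trans; first apply: esum_scale_le.
- by rewrite lee_fin norm1_ge0.
- by move=> s; rewrite lee_fin.
by rewrite l1_esum // -EFinM mulrC.
Qed.

End Conv.
End L1.


Section Pow.
Variables (R : realType) (K : zmodType).
Implicit Types f g h k : K -> R.

Lemma esum_pow_le (a : K -> R) (B p : R) : (forall x, 0 <= a x) ->
  (forall x, a x <= B) -> 1 <= p ->
  (\esum_(x in [set: K]) (a x `^ p)%:E <=
    (B `^ (p - 1))%:E * \esum_(x in [set: K]) (a x)%:E)%E.
Proof.
move=> a0 aB p1.
have B0 : 0 <= B by apply: le_trans (aB 0).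
apply: le_trans; last first.
  by apply: esum_scale_le => [|x]; rewrite lee_fin ?powR_ge0.
apply: le_esum => x _; rewrite -EFinM lee_fin.
rewrite -(mulr_powRB1 (a0 x)) ?(lt_le_trans ltr01) // mulrC.
apply: ler_wpM2r; first exact: a0.
apply: ge0_ler_powR; rewrite ?nnegrE ?subr_ge0 //; exact: powR_ge0.
Qed.

Lemma pow_esum_fin k p : nonneg_l1 k -> 1 <= p ->
  (\esum_(x in [set: K]) (k x `^ p)%:E < +oo)%E.
Proof.
move=> hk p1.
have kB : forall x, k x <= norm1 k by move=> x; exact: l1_le.
apply: (le_lt_trans (@esum_pow_le k (norm1 k) p hk.1 kB p1)).
by rewrite l1_esum // -EFinM ltry.
Qed.

Lemma pow_esum_finE k p : nonneg_l1 k -> 1 <= p ->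
  (\esum_(x in [set: K]) (k x `^ p)%:E) \is a fin_num.
Proof. by move=> hk p1; rewrite ge0_fin_numE ?esum_ge0' ?pow_esum_fin. Qed.

Lemma normp_powp k p : nonneg_l1 k -> 1 <= p ->
  (normp p k `^ p)%:E = \esum_(x in [set: K]) (k x `^ p)%:E.
Proof.
move=> hk p1; rewrite /normp -powRrM mulVf ?powRr1 ?fineK ?pow_esum_finE //.
  exact/fine_ge0/esum_ge0'.
by rewrite gt_eqF // (lt_le_trans ltr01).
Qed.

Lemma normp_le_norm1 k p : nonneg_l1 k -> 1 <= p -> normp p k <= norm1 k.
Proof.
move=> hk p1; have p0 : 0 < p by rewrite (lt_le_trans ltr01).
have B0 : 0 <= norm1 k by exact: norm1_ge0.
have E : (\esum_(x in [set: K]) (k x `^ p)%:E <= (norm1 k `^ p)%:E)%E.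
  have kB : forall x, k x <= norm1 k by move=> x; exact: l1_le.
  apply: (le_trans (@esum_pow_le k (norm1 k) p hk.1 kB p1)).
  by rewrite l1_esum // -EFinM lee_fin mulrC mulr_powRB1.
rewrite /normp -[leRHS](@powRr1 _ (norm1 k)) // -(mulfV (lt0r_neq0 p0)) powRrM.
apply: ge0_ler_powR; rewrite ?nnegrE ?invr_ge0 ?powR_ge0 ?(ltW p0) //.
  exact/fine_ge0/esum_ge0'.
by rewrite -lee_fin fineK ?pow_esum_finE.
Qed.

Lemma normp0 p : p != 0 -> normp p (fun _ : K => (0 : R)) = 0.
Proof.
move=> p0; rewrite /normp /= powR0 // esum1 // powR0 //.
by rewrite invr_eq0.
Qed.

Lemma normp_ge0 k p : 0 <= normp p k.
Proof. exact: powR_ge0. Qed.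

Lemma normp_gt0 k p x : nonneg_l1 k -> 1 <= p -> k x != 0 -> 0 < normp p k.
Proof.
move=> hk p1 kx; rewrite /normp powR_gt0 // fine_gt0 //.
rewrite pow_esum_fin // andbT.
have h0 : forall y, (0 <= (k y `^ p)%:E)%E by move=> y; rewrite lee_fin powR_ge0.
apply: (lt_le_trans _ (@esum_term_le R K (fun y => (k y `^ p)%:E) x h0)).
by rewrite lte_fin powR_gt0 // lt_def kx hk.1.
Qed.

End Pow.


Definition res {R : realType} {G G' : zmodType} (phi : G -> G') (c : G') (f : G -> R) :=
  fun y => if phi y == c then f y else 0.

Section Res.
Variables (R : realType) (G G' : zmodType) (phi : G -> G').
Implicit Types f g h k : G -> R.

Lemma res_le f c y : (forall x, 0 <= f x) -> res phi c f y <= f y.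
Proof. by move=> f0; rewrite /res; case: ifP. Qed.

Lemma res_ge0 f c y : (forall x, 0 <= f x) -> 0 <= res phi c f y.
Proof. by move=> f0; rewrite /res; case: ifP. Qed.

Lemma res_l1 f c : nonneg_l1 f -> nonneg_l1 (res phi c f).
Proof.
move=> hf; apply: l1_of_bound => [y|]; first exact: res_ge0 hf.1.
apply: le_lt_trans (ltry (norm1 f)); rewrite -l1_esum //.
by apply: le_esum => y _; rewrite lee_fin res_le //; exact: hf.1.
Qed.

Lemma res_esum f c : \esum_(x in [set: G]) (res phi c f x)%:E =
  \esum_(x in [set: G]) (if phi x == c then (f x)%:E else 0)%E.
Proof. by apply: eq_esum => x _; rewrite /res; case: ifP. Qed.

Lemma norm1_partition f : nonneg_l1 f ->
  \esum_(c in [set: G']) (norm1 (res phi c f))%:E = (norm1 f)%:E.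
Proof.
move=> hf.
rewrite (eq_esum (b := fun c => \esum_(x in [set: G]) (res phi c f x)%:E)); last first.
  by move=> c _; rewrite l1_esum //; exact: res_l1.
under eq_esum do rewrite res_esum.
rewrite -esum_partition ?l1_esum // => x.
by rewrite lee_fin; exact: hf.1.
Qed.

Lemma normp_partition g p : nonneg_l1 g -> 1 <= p ->
  normp p (fun c => normp p (res phi c g)) = normp p g.
Proof.
move=> hg p1; rewrite {1}/normp.
have p0 : p != 0 by rewrite gt_eqF // (lt_le_trans ltr01).
rewrite (eq_esum (b := fun c => \esum_(x in [set: G]) ((res phi c g x) `^ p)%:E)); last first.
  by move=> c _; rewrite normp_powp //; exact: res_l1.
rewrite (eq_esum (b := fun c => \esum_(x in [set: G])
   (if phi x == c then (g x `^ p)%:E else 0)%E)); last first.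
  move=> c _; apply: eq_esum => x _; rewrite /res; case: ifP => // _.
  by rewrite powR0.
by rewrite -esum_partition // => x; rewrite lee_fin powR_ge0.
Qed.

Lemma gprime_l1 g p : nonneg_l1 g -> 1 <= p ->
  nonneg_l1 (fun c => normp p (res phi c g)).
Proof.
move=> hg p1; apply: l1_of_bound => [c|]; first exact: normp_ge0.
apply: le_lt_trans (ltry (norm1 g)); rewrite -norm1_partition //.
apply: le_esum => c _; rewrite lee_fin normp_le_norm1 //; exact: res_l1.
Qed.

Lemma gprime_nz g p : nonneg_l1 g -> 1 <= p -> g <> (fun=> 0) ->
  (fun c => normp p (res phi c g)) <> (fun=> 0).
Proof.
move=> hg p1 gnz.
have [x /eqP gx] : exists x, ~ g x = 0.
  by apply/existsNP => all; apply: gnz; apply: funext.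
move=> /(congr1 (fun F => F (phi x))) /=.
apply/eqP; rewrite gt_eqF //; apply: (@normp_gt0 R G _ p x) => //; first exact: res_l1.
by rewrite /res eqxx.
Qed.

End Res.


Definition gset {R : realType} {K : zmodType} (p : R) (f : K -> R) : set R :=
  [set r : R | exists g h : K -> R,
         [/\ nonneg_l1 g, nonneg_l1 h, g <> (fun=> 0), h <> (fun=> 0) &
             r = norm1 (mconv (mconv f g) h) /
                 (normp p g * normp (p / (p - 1)) h)]].

Lemma gammapE {R : realType} {K : zmodType} (p : R) (f : K -> R) :
  gammap p f = inf (gset p f).
Proof. by []. Qed.

Lemma gset_lb {R : realType} {K : zmodType} (p : R) (f : K -> R) :
  has_lbound (gset p f).
Proof.
exists 0 => _ [g [h [_ _ _ _ ->]]].
by rewrite divr_ge0 ?norm1_ge0 // mulr_ge0 // normp_ge0.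
Qed.

Section Conv.
Variables (R : realType) (G G' : zmodType) (phi : G -> G').
Hypothesis phi_morph : {morph phi : x y / x + y}.
Variables (f g h : G -> R).
Hypotheses (hf : nonneg_l1 f) (hg : nonneg_l1 g) (hh : nonneg_l1 h).

Lemma phiB x t : phi (x - t) = phi x - phi t.
Proof. by have := phi_morph (x - t) t; rewrite subrK => ->; rewrite addrK. Qed.

Let F := mconv (mconv f g) h.
Let hF : nonneg_l1 F := @mconv_l1 _ _ _ _ (@mconv_l1 _ _ _ _ hf hg) hh.

Lemma conv_res_le a b d x :
  mconv (mconv (res phi a f) (res phi b g)) (res phi d h) x <=
  res phi (a + b + d) F x.
Proof.
have f0 := hf.1; have g0 := hg.1; have h0 := hh.1.
have hfa := @res_l1 R G G' phi _ a hf; have hgb := @res_l1 R G G' phi _ b hg.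
have hhd := @res_l1 R G G' phi _ d hh.
have -> : res phi (a + b + d) F x = if phi x == a + b + d then F x else 0 by [].
case: ifP => hx.
  apply: ge_sup; first by exists (mconv (res phi a f) (res phi b g) 0 * res phi d h (x - 0)), 0.
  move=> _ [t _ <-].
  apply: le_trans (@mconv_ge _ _ _ _ (@mconv_l1 _ _ _ _ hf hg) hh x t).
  apply: ler_pM.
  - exact: mconv_ge0.
  - exact: res_ge0.
  - apply: ge_sup; first by exists (res phi a f 0 * res phi b g (t - 0)), 0.
    move=> _ [s _ <-]; apply: le_trans (@mconv_ge _ _ _ _ hf hg t s).
    by apply: ler_pM; rewrite ?res_ge0 ?res_le.
  - exact: res_le.
apply: ge_sup; first by exists (mconv (res phi a f) (res phi b g) 0 * res phi d h (x - 0)), 0.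
move=> _ [t _ <-].
case: (eqVneq (phi (x - t)) d) => hd'; last first.
  have -> : res phi d h (x - t) = 0 by rewrite /res (negbTE hd').
  by rewrite mulr0.
apply: mulr_le0_ge0; last exact: res_ge0.
apply: ge_sup; first by exists (res phi a f 0 * res phi b g (t - 0)), 0.
move=> _ [s _ <-]; rewrite /res.
case: eqP => ha; case: eqP => hb; rewrite ?mul0r ?mulr0 //.
exfalso; move/negbT: hx; apply/negP; rewrite negbK.
have -> : x = s + (t - s) + (x - t) by rewrite [s + _]addrC subrK addrC subrK.
by rewrite phi_morph (phi_morph s) ha hb hd'.
Qed.

Lemma norm1_conv_res a b d :
  norm1 (mconv (mconv (res phi a f) (res phi b g)) (res phi d h)) <=
  norm1 (res phi (a + b + d) F).
Proof.
have hfa := @res_l1 R G G' phi _ a hf; have hgb := @res_l1 R G G' phi _ b hg.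
have hhd := @res_l1 R G G' phi _ d hh.
have hl := @mconv_l1 _ _ _ _ (@mconv_l1 _ _ _ _ hfa hgb) hhd.
have hr := @res_l1 R G G' phi _ (a + b + d) hF.
rewrite -lee_fin -!l1_esum //; apply: le_esum => x _.
by rewrite lee_fin conv_res_le.
Qed.

End Conv.


Section Main.
Variables (R : realType) (G G' : zmodType) (phi : G -> G').
Hypothesis phi_morph : {morph phi : x y / x + y}.
Variables (p : R) (hp1 : 1 < p).
Variables (f g h : G -> R).
Hypotheses (hf : nonneg_l1 f) (hg : nonneg_l1 g) (hh : nonneg_l1 h).

Let q := p / (p - 1).
Let fphi c := gammap p (res phi c f).
Let g' c := normp p (res phi c g).
Let h' c := normp q (res phi c h).
Let F := mconv (mconv f g) h.
Let e c := norm1 (res phi c F).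

Lemma p_neq0 : p != 0. Proof. by rewrite gt_eqF // (lt_trans ltr01). Qed.
Lemma q_neq0 : q != 0. Proof. rewrite /q mulf_neq0 ?invr_eq0 ?p_neq0 // subr_eq0 gt_eqF //. Qed.

Lemma C1 a b d : fphi a * g' b * h' d <= e (a + b + d).
Proof.
have e0 : 0 <= e (a + b + d) by exact: norm1_ge0.
have [gb0|gbp] := eqVneq (g' b) 0; first by rewrite gb0 mulr0 mul0r.
have [hd0|hdp] := eqVneq (h' d) 0; first by rewrite hd0 mulr0.
have gbpos : 0 < g' b by rewrite lt_def gbp normp_ge0.
have hdpos : 0 < h' d by rewrite lt_def hdp normp_ge0.
rewrite -mulrA -ler_pdivlMr; last exact: mulr_gt0 gbpos hdpos.
have mem : gset p (res phi a f)
  (norm1 (mconv (mconv (res phi a f) (res phi b g)) (res phi d h)) / (g' b * h' d)).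
  exists (res phi b g), (res phi d h); split => //.
  - exact: res_l1.
  - exact: res_l1.
  - by move=> E0; move: gbp; rewrite /g' E0 normp0 ?eqxx // p_neq0.
  - by move=> E0; move: hdp; rewrite /h' E0 normp0 ?eqxx // q_neq0.
apply: le_trans (ge_inf (gset_lb _ _) mem) _.
have den0 : 0 <= (g' b * h' d)^-1.
  by rewrite invr_ge0; exact: (mulr_ge0 (ltW gbpos) (ltW hdpos)).
apply: (ler_wpM2r den0).
exact: (@norm1_conv_res R G G' phi phi_morph f g h hf hg hh a b d).
Qed.

Lemma C2 c : mconv (mconv fphi g') h' c <= e c.
Proof.
apply: ge_sup; first by exists (mconv fphi g' 0 * h' (c - 0)), 0.
move=> _ [t _ <-].
have [hz|hnz] := eqVneq (h' (c - t)) 0; first by rewrite hz mulr0; exact: norm1_ge0.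
have hpos : 0 < h' (c - t) by rewrite lt_def hnz normp_ge0.
rewrite -ler_pdivlMr; last exact: hpos.
apply: ge_sup; first by exists (fphi 0 * g' (t - 0)), 0.
move=> _ [s _ <-]; rewrite ler_pdivlMr; last exact: hpos.
have eq : s + (t - s) + (c - t) = c by rewrite [s + _]addrC subrK addrC subrK.
have := C1 s (t - s) (c - t); rewrite eq; exact.
Qed.

Lemma N_le : norm1 (mconv (mconv fphi g') h') <= norm1 F.
Proof.
have hF : nonneg_l1 F := @mconv_l1 _ _ _ _ (@mconv_l1 _ _ _ _ hf hg) hh.
have H : (\esum_(c in [set: G']) (mconv (mconv fphi g') h' c)%:E <= (norm1 F)%:E)%E.
  rewrite -(@norm1_partition R G G' phi F hF); apply: le_esum => c _.
  by rewrite lee_fin C2.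
have fin : \esum_(c in [set: G']) (mconv (mconv fphi g') h' c)%:E \is a fin_num.
  rewrite ge0_fin_numE; last exact: esum_ge0'.
  exact: (le_lt_trans H (ltry _)).
rewrite {1}/norm1; exact: (fine_le fin _ H).
Qed.

End Main.


Theorem mainTheorem12 (R : realType) (G G' : zmodType) (phi : G -> G')
    (H : set G)
    (phi_morph : {morph phi : x y / x + y})
    (phi_surj : forall y : G', exists x : G, phi x = y)
    (phi_ker : forall x : G, phi x = 0 <-> H x)
    (p : R) (hp1 : 1 < p) (f : G -> R) (hf : nonneg_l1 f) :
  let f_phi : G' -> R :=
    fun x => gammap p (fun y : G => if phi y == x then f y else 0) in
  gammap p f_phi <= gammap p f.
Proof.
cbv zeta.
pose f_phi := fun c => gammap p (res phi c f).
change (gammap p f_phi <= gammap p f).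
have q1 : 1 <= p / (p - 1).
  rewrite ler_pdivlMr; last by rewrite subr_gt0.
  lra.
rewrite (gammapE p f_phi) (gammapE p f).
apply: lb_le_inf.
  pose dl := fun x : G => if x == 0 then (1 : R) else 0.
  have hd : nonneg_l1 dl.
    apply: l1_of_bound => [x|]; first by rewrite /dl; case: ifP.
    rewrite (eq_esum (b := fun x => if x \in [set (0 : G)] then 1%E else 0%E)).
      rewrite -(esum_mkcond [set (0 : G)] (fun _ => 1%E)) esum_set1 //.
      exact: ltry.
    move=> x _; rewrite /dl; case: eqP => [->|nx]; first by rewrite mem_set.
    by rewrite memNset.
  have dnz : dl <> (fun=> 0).
    move=> /(congr1 (fun F => F 0)); rewrite /dl eqxx => /eqP.
    by rewrite oner_eq0.
  exists (norm1 (mconv (mconv f dl) dl) / (normp p dl * normp (p / (p - 1)) dl)).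
  exists dl, dl; split; [exact: hd|exact: hd|exact: dnz|exact: dnz|reflexivity].
move=> _ [g [h [hg hh gnz hnz ->]]].
pose g' := fun c => normp p (res phi c g).
pose h' := fun c => normp (p / (p - 1)) (res phi c h).
have mem : gset p f_phi
  (norm1 (mconv (mconv f_phi g') h') / (normp p g' * normp (p / (p - 1)) h')).
  exists g', h'; split.
  - exact: (@gprime_l1 R G G' phi g p hg (ltW hp1)).
  - exact: (@gprime_l1 R G G' phi h _ hh q1).
  - exact: (@gprime_nz R G G' phi g p hg (ltW hp1) gnz).
  - exact: (@gprime_nz R G G' phi h _ hh q1 hnz).
  - reflexivity.
apply: le_trans (ge_inf (gset_lb _ _) mem) _.
rewrite /g' /h' (@normp_partition R G G' phi g p hg (ltW hp1)).
rewrite (@normp_partition R G G' phi h _ hh q1).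
have den0 : 0 <= (normp p g * normp (p / (p - 1)) h)^-1.
  by rewrite invr_ge0; apply: mulr_ge0; exact: normp_ge0.
apply: (ler_wpM2r den0).
exact: (@N_le R G G' phi phi_morph p hp1 f g h hf hg hh).
Qed.
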